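(* Let $\mathcal{L}$ be a functional first-order language and let $\mathcal{B}$ be an equationally Noetherian $\mathcal{L}$-algebra. Then for a finitely generated $\mathcal{L}$-algebra $\mathcal{C}$ the following conditions are equivalent: (1) $\mathrm{Th}_{\forall}(\mathcal{B}) \subseteq \mathrm{Th}_{\forall}(\mathcal{C})$ (i.e. $\mathcal{C}$ lies in the universal closure of $\mathcal{B}$); (2) $\mathrm{Th}_{\exists}(\mathcal{B}) \supseteq \mathrm{Th}_{\exists}(\mathcal{C})$; (3) $\mathcal{C}$ embeds into an ultrapower of $\mathcal{B}$; (4) $\mathcal{C}$ is discriminated by $\mathcal{B}$; (5) $\mathcal{C}$ is (isomorphic to) a limit algebra over $\mathcal{B}$; (6) $\mathcal{C}$ is (isomorphic to) the algebra defined by a complete atomic type in the theory $\mathrm{Th}_{\forall}(\mathcal{B})$ in $\mathcal{L}$; (7) $\mathcal{C}$ is (isomorphic to) the coordinate algebra of an irreducible algebraic set over $\mathcal{B}$ defined by a system of coefficient-free equations.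
   Context: A functional language $\mathcal{L}$ consists of operation symbols $F$ (with arities $n_F$) and constant symbols, no predicates; $\mathcal{L}$-structures are called $\mathcal{L}$-algebras. $\mathrm{Th}_\forall(\mathcal{M})$ ($\mathrm{Th}_\exists(\mathcal{M})$) is the set of universal (existential) $\mathcal{L}$-sentences true in $\mathcal{M}$. $\mathcal{T}_{\mathcal{L}}(X)$ is the absolutely free $\mathcal{L}$-algebra (term algebra) on variables $X$. An equation is an atomic formula $t=s$ with $t,s$ terms; for $X=\{x_1,\dots,x_n\}$ and a set $S$ of equations in $X$ (a system), $\mathrm{V}_{\mathcal{B}}(S)=\{\bar b\in B^n : \mathcal{B}\models S(\bar b)\}$ is the algebraic set defined by $S$. $\mathcal{B}$ is equationally Noetherian if for every $n$ and every system $S$ in variables $x_1,\dots,x_n$ there is a finite $S_0\subseteq S$ with $\mathrm{V}_{\mathcal{B}}(S)=\mathrm{V}_{\mathcal{B}}(S_0)$. For $Y\subseteq B^n$, $\mathrm{Rad}(Y)$ is the set of all equations in $X$ holding at every point of $Y$ (all equations if $Y=\emptyset$); it defines a congruence $\theta$ on $\mathcal{T}_{\mathcal{L}}(X)$ by $t\sim s \iff (t=s)\in\mathrm{Rad}(Y)$, and the coordinate algebra of an algebraic set $Y$ is $\Gamma(Y)=\mathcal{T}_{\mathcal{L}}(X)/\theta$. Zariski topology on $B^n$: algebraic sets form a prebasis of closed sets (closed sets are arbitrary intersections of finite unions of algebraic sets). An algebraic set is irreducible if it is not the union of two proper closed subsets. $\mathcal{C}$ is discriminated by $\mathcal{B}$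 if for every finite $W\subseteq C$ there is a homomorphism $\mathcal{C}\to\mathcal{B}$ injective on $W$. Complete atomic types: for a theory $T$ and finite $X$, an atomic type is a set $p$ of atomic formulas and negations of atomic formulas in variables $X$ such that $p\cup T$ is realized in some model of $T$; a complete atomic type is a maximal one. Its positive part $p^+$ (the atomic formulas in $p$) defines a congruence $\theta_p$ on $\mathcal{T}_{\mathcal{L}}(X)$ ($t\sim s\iff (t=s)\in p^+$), and $\mathcal{T}_{\mathcal{L}}(X)/\theta_p$ is the algebra defined by $p$. Limit algebras: a diagram-formula in a finite reduct $\mathcal{L}'$ of $\mathcal{L}$ in a finite variable set $X$ is a conjunction of atomic formulas and negated atomic formulas of $\mathcal{L}'$ such that: $\neg(x=y)$ is a conjunct for every pair of distinct $x,y\in X$; for each operation symbol $F\in\mathcal{L}'$ and each $(x_0,\dots,x_{n_F})\in X^{n_F+1}$ exactly one of $F(x_1,\dots,x_{n_F})=x_0$ or its negation is a conjunct; for each constant $c\in\mathcal{L}'$ and $x\in X$ exactly one of $x=c$ or $\neg(x=c)$ is a conjunct. A direct system of formulas $\Lambda=(I,\varphi_i,\gamma_{ij})$ consists of a directed poset $(I,\le)$, for each $i$ a consistent diagram-formula $\varphi_i$ in a finite reduct $\mathcal{L}_i$ and finite variable set $X_i$, and maps $\gamma_{ij}:X_i\to X_j$ ($i\le j$) with $\gamma_{ii}=\mathrm{id}$, $\gamma_{jk}\gamma_{ij}=\gamma_{ik}$, every conjunct of $\varphi_i(\gamma_{ij}(X_i))$ a conjunct of $\varphi_j$; moreover for every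 constant $c$ some $\varphi_i$ has a conjunct $x=c$ ($x\in X_i$), and for every $F$, $i$, and $(x_1,\dots,x_{n_F})\in X_i^{n_F}$ there is $j\ge i$ such that $\varphi_j$ has a conjunct $F(\gamma_{ij}(x_1),\dots,\gamma_{ij}(x_{n_F}))=x_j$ with $x_j\in X_j$. The limit algebra $L(\Lambda)$ has universe $\{(x,i): x\in X_i, i\in I\}/\!\equiv$ where $(x,i)\equiv(y,j)$ iff $\gamma_{ik}(x)=\gamma_{jk}(y)$ for some $k\ge i,j$; a constant $c$ is interpreted as the class of $(x,i)$ where $\varphi_i$ contains $x=c$, and $F(\langle x_1,i_1\rangle,\dots)=\langle x_j,j\rangle$ where $j\ge i_1,\dots$ and $\varphi_j$ contains $F(\gamma_{i_1j}(x_1),\dots)=x_j$ (these are well defined). $L(\Lambda)$ is a limit algebra over $\mathcal{B}$ if every $\varphi_i$ is realizable in $\mathcal{B}$ (true under some assignment $X_i\to B$). *)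

(* Defs.v *)
From mathcomp Require Import all_boot.
From Stdlib Require List.
Set Implicit Arguments.
Unset Strict Implicit.
Unset Printing Implicit Defensive.

Record lang := Lang {
  op : Type;
  arity : op -> nat;
  cst : Type }.

Record algebra (L : lang) := Algebra {
  carrier :> Type;
  opint : forall F : op L, ('I_(arity F) -> carrier) -> carrier;
  cint : cst L -> carrier }.

Arguments opint {L} a F _.
Arguments cint {L} a c.

Definition is_hom (L : lang) (A A' : algebra L) (h : A -> A') : Prop :=
  (forall (F : op L) (args : 'I_(arity F) -> A),
      h (opint A F args) = opint A' F (fun k => h (args k))) /\
  (forall c : cst L, h (cint A c) = cint A' c).
Arguments is_hom {L A A'} h.

Inductive term (L : lang) (V : Type) : Type :=
| tvar : V -> term L V
| tconst : cst L -> term L V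
| tapp : forall F : op L, ('I_(arity F) -> term L V) -> term L V.

Arguments tvar {L V} x.
Arguments tconst {L V} c.
Arguments tapp {L V} F args.

Fixpoint teval (L : lang) (V : Type) (A : algebra L) (v : V -> A)
    (t : term L V) : A :=
  match t with
  | tvar x => v x
  | tconst c => cint A c
  | tapp F args => opint A F (fun k => @teval L V A v (args k))
  end.
Arguments teval {L V} A v t.

Definition term_alg (L : lang) (V : Type) : algebra L :=
  @Algebra L (term L V) (fun F args => tapp F args) (fun c => tconst c).

Inductive qf (L : lang) (V : Type) : Type :=
| qeq : term L V -> term L V -> qf L V
| qnot : qf L V -> qf L V
| qand : qf L V -> qf L V -> qf L V
| qor : qf L V -> qf L V -> qf L V.

Fixpoint qholds (L : lang) (V : Type) (A : algebra L) (v : V -> A)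
    (phi : qf L V) : Prop :=
  match phi with
  | qeq t s => @teval L V A v t = @teval L V A v s
  | qnot p => ~ @qholds L V A v p
  | qand p q => @qholds L V A v p /\ @qholds L V A v q
  | qor p q => @qholds L V A v p \/ @qholds L V A v q
  end.
Arguments qholds {L V} A v phi.

(* A universal (resp. existential) L-sentence is  forall x_1..x_n, phi
   (resp. exists x_1..x_n, phi) with phi quantifier-free in 'I_n. *)
Definition univ_true (L : lang) (A : algebra L) (n : nat) (phi : qf L 'I_n) : Prop :=
  forall a : 'I_n -> A, qholds A a phi.
Arguments univ_true {L} A n phi.

Definition exist_true (L : lang) (A : algebra L) (n : nat) (phi : qf L 'I_n) : Prop :=
  exists a : 'I_n -> A, qholds A a phi.
Arguments exist_true {L} A n phi.

Definition Th_univ_sub (L : lang) (A A' : algebra L) : Prop :=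
  forall (n : nat) (phi : qf L 'I_n), univ_true A n phi -> univ_true A' n phi.
Arguments Th_univ_sub {L} A A'.

Definition Th_exist_sub (L : lang) (A A' : algebra L) : Prop :=
  forall (n : nat) (phi : qf L 'I_n), exist_true A n phi -> exist_true A' n phi.
Arguments Th_exist_sub {L} A A'.

Definition fin_gen (L : lang) (C : algebra L) : Prop :=
  exists (n : nat) (g : 'I_n -> C), forall c : C, exists t : term L 'I_n, teval C g t = c.
Arguments fin_gen {L} C.

Definition system (L : lang) (n : nat) := (term L 'I_n * term L 'I_n) -> Prop.

Definition Vset (L : lang) (B : algebra L) (n : nat) (S : system L n)
    (b : 'I_n -> B) : Prop :=
  forall e, S e -> teval B b e.1 = teval B b e.2.
Arguments Vset {L} B {n} S b.

Definition eq_noetherian (L : lang) (B : algebra L) : Prop :=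
  forall (n : nat) (S : system L n),
    exists S0 : list (term L 'I_n * term L 'I_n),
      (forall e, List.In e S0 -> S e) /\
      (forall b, Vset B S b <-> Vset B (fun e => List.In e S0) b).
Arguments eq_noetherian {L} B.

(* Zariski-closed subsets of B^n: arbitrary intersections of finite unions
   of algebraic sets. *)
Definition zclosed (L : lang) (B : algebra L) (n : nat) (Z : ('I_n -> B) -> Prop) : Prop :=
  exists (J : Type) (fam : J -> list (system L n)),
    forall b, Z b <-> (forall j, exists S, List.In S (fam j) /\ Vset B S b).
Arguments zclosed {L} B {n} Z.

Definition irreducible (L : lang) (B : algebra L) (n : nat) (Y : ('I_n -> B) -> Prop) : Prop :=
  (exists b, Y b) /\
  ~ (exists Y1 Y2 : ('I_n -> B) -> Prop,
        zclosed B Y1 /\ zclosed B Y2 /\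
        (forall b, Y1 b -> Y b) /\ ~ (forall b, Y b -> Y1 b) /\
        (forall b, Y2 b -> Y b) /\ ~ (forall b, Y b -> Y2 b) /\
        (forall b, Y b <-> Y1 b \/ Y2 b)).
Arguments irreducible {L} B {n} Y.

(* C is isomorphic to T_L(X)/theta, where theta = { (t,s) | R (t,s) }:
   there is a surjective homomorphism T_L(X) -> C whose kernel is theta. *)
Definition iso_term_quotient (L : lang) (C : algebra L) (n : nat)
    (R : term L 'I_n -> term L 'I_n -> Prop) : Prop :=
  exists h : term_alg L 'I_n -> C,
    is_hom h /\ (forall c : C, exists t, h t = c) /\
    (forall t s, h t = h s <-> R t s).
Arguments iso_term_quotient {L} C {n} R.

Definition iso_coord_alg (L : lang) (B C : algebra L) (n : nat)
    (Y : ('I_n -> B) -> Prop) : Prop :=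
  iso_term_quotient C (fun t s => forall b, Y b -> teval B b t = teval B b s).
Arguments iso_coord_alg {L} B C {n} Y.

Definition ultrafilter (I : Type) (U : (I -> Prop) -> Prop) : Prop :=
  U (fun _ => True) /\ ~ U (fun _ => False) /\
  (forall P Q : I -> Prop, U P -> (forall i, P i -> Q i) -> U Q) /\
  (forall P Q : I -> Prop, U P -> U Q -> U (fun i => P i /\ Q i)) /\
  (forall P : I -> Prop, U P \/ U (fun i => ~ P i)).
Arguments ultrafilter {I} U.

(* C embeds into the ultrapower B^I/U: an embedding C -> B^I/U, given on
   representatives (h c is a representative of the image of c). *)
Definition embeds_in_ultrapower (L : lang) (C B : algebra L) : Prop :=
  exists (I : Type) (U : (I -> Prop) -> Prop) (h : C -> I -> B),
    ultrafilter U /\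
    (forall (F : op L) (args : 'I_(arity F) -> C),
        U (fun i => h (opint C F args) i = opint B F (fun k => h (args k) i))) /\
    (forall c : cst L, U (fun i => h (cint C c) i = cint B c)) /\
    (forall x y : C, U (fun i => h x i = h y i) -> x = y).
Arguments embeds_in_ultrapower {L} C B.

Definition discriminated (L : lang) (C B : algebra L) : Prop :=
  forall W : list C, exists h : C -> B,
    is_hom h /\ (forall x y, List.In x W -> List.In y W -> h x = h y -> x = y).
Arguments discriminated {L} C B.

(* A literal (b, t, s): t = s if b = true, ~ (t = s) if b = false. *)
Definition literal (L : lang) (n : nat) := (bool * term L 'I_n * term L 'I_n)%type.

Definition lit_holds (L : lang) (n : nat) (A : algebra L) (a : 'I_n -> A)
    (l : literal L n) : Prop :=
  let: (b, t, s) := l in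
  if b then teval A a t = teval A a s else teval A a t <> teval A a s.
Arguments lit_holds {L n} A a l.

Definition model_Th_univ (L : lang) (B M : algebra L) : Prop := Th_univ_sub B M.
Arguments model_Th_univ {L} B M.

Definition atomic_type (L : lang) (B : algebra L) (n : nat) (p : literal L n -> Prop) : Prop :=
  exists M : algebra L, model_Th_univ B M /\
    exists a : 'I_n -> M, forall l, p l -> lit_holds M a l.
Arguments atomic_type {L} B n p.

Definition complete_atomic_type (L : lang) (B : algebra L) (n : nat)
    (p : literal L n -> Prop) : Prop :=
  atomic_type B n p /\
  forall q, atomic_type B n q -> (forall l, p l -> q l) -> (forall l, q l -> p l).
Arguments complete_atomic_type {L} B n p.

(* A diagram-formula in the finite reduct (dops, dcsts) of L with variables
   'I_dnv.  It is the conjunction of: ~(x = y) for all distinct x, y;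
   for F in dops and (x_0, x_1..x_nF): F(x_1..) = x_0 if dopR F xs x0,
   its negation otherwise; for c in dcsts and x: x = c if dcR c x, its
   negation otherwise. *)
Record diagram (L : lang) := Diagram {
  dops : list (op L);
  dcsts : list (cst L);
  dnv : nat;
  dopR : forall F : op L, ('I_(arity F) -> 'I_dnv) -> 'I_dnv -> Prop;
  dcR : cst L -> 'I_dnv -> Prop }.
Arguments dops {L} d.
Arguments dcsts {L} d.
Arguments dnv {L} d.
Arguments dopR {L} d F _ _.
Arguments dcR {L} d c x.

Definition dsat (L : lang) (M : algebra L) (d : diagram L) (v : 'I_(dnv d) -> M) : Prop :=
  (forall x y, x <> y -> v x <> v y) /\
  (forall F, List.In F (dops d) -> forall xs x0,
      dopR d F xs x0 <-> opint M F (fun k => v (xs k)) = v x0) /\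
  (forall c, List.In c (dcsts d) -> forall x, dcR d c x <-> v x = cint M c).
Arguments dsat {L} M d v.

Definition realizable (L : lang) (M : algebra L) (d : diagram L) : Prop :=
  exists v, dsat M d v.
Arguments realizable {L} M d.

Definition consistent (L : lang) (d : diagram L) : Prop :=
  exists M : algebra L, realizable M d.
Arguments consistent {L} d.

Record dsystem (L : lang) := DSystem {
  dI : Type;
  dle : dI -> dI -> Prop;
  dphi : dI -> diagram L;
  dgam : forall i j : dI, 'I_(dnv (dphi i)) -> 'I_(dnv (dphi j)) }.
Arguments dI {L} _.
Arguments dle {L} _ _ _.
Arguments dphi {L} _ _.
Arguments dgam {L} _ _ _ _.
(* dgam i j is only relevant when dle i j. *)

Definition is_dsystem (L : lang) (S : dsystem L) : Prop :=
  (forall i, dle S i i) /\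
  (forall i j k, dle S i j -> dle S j k -> dle S i k) /\
  (forall i j, dle S i j -> dle S j i -> i = j) /\
  (exists i : dI S, True) /\
  (forall i j, exists k, dle S i k /\ dle S j k) /\
  (forall i, consistent (dphi S i)) /\
  (forall i x, dgam S i i x = x) /\
  (forall i j k, dle S i j -> dle S j k -> forall x,
      dgam S j k (dgam S i j x) = dgam S i k x) /\
  (* every conjunct of phi_i(gamma_ij(X_i)) is a conjunct of phi_j *)
  (forall i j, dle S i j ->
     (forall x y, x <> y -> dgam S i j x <> dgam S i j y) /\
     (forall F, List.In F (dops (dphi S i)) -> forall xs x0,
        List.In F (dops (dphi S j)) /\
        (dopR (dphi S i) F xs x0 <->
         dopR (dphi S j) F (fun k => dgam S i j (xs k)) (dgam S i j x0))) /\
     (forall c, List.In c (dcsts (dphi S i)) -> forall x,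
        List.In c (dcsts (dphi S j)) /\
        (dcR (dphi S i) c x <-> dcR (dphi S j) c (dgam S i j x)))) /\
  (forall c : cst L, exists i x, List.In c (dcsts (dphi S i)) /\ dcR (dphi S i) c x) /\
  (forall (F : op L) (i : dI S) (xs : 'I_(arity F) -> 'I_(dnv (dphi S i))),
     exists j x, dle S i j /\ List.In F (dops (dphi S j)) /\
       dopR (dphi S j) F (fun k => dgam S i j (xs k)) x).

Definition limit_over (L : lang) (B : algebra L) (S : dsystem L) : Prop :=
  is_dsystem S /\ forall i, realizable B (dphi S i).
Arguments limit_over {L} B S.

Definition dnode (L : lang) (S : dsystem L) := {i : dI S & 'I_(dnv (dphi S i))}.

(* C is isomorphic to L(Lambda): a bijection between the universe of
   L(Lambda) (the pairs (x,i) modulo ==) and C, i.e. a surjection pi from the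
   pairs onto C with kernel exactly ==, which respects constants and
   operations as they are interpreted in L(Lambda). *)
Definition iso_limit (L : lang) (C : algebra L) (S : dsystem L) : Prop :=
  exists pi : dnode S -> C,
    (forall c : C, exists p, pi p = c) /\
    (forall p q : dnode S, pi p = pi q <->
       exists k, dle S (projT1 p) k /\ dle S (projT1 q) k /\
                 dgam S (projT1 p) k (projT2 p) = dgam S (projT1 q) k (projT2 q)) /\
    (forall c i x, List.In c (dcsts (dphi S i)) -> dcR (dphi S i) c x ->
       pi (existT _ i x) = cint C c) /\
    (forall (F : op L) (a : 'I_(arity F) -> dnode S) (j : dI S) (xj : 'I_(dnv (dphi S j))),
       (forall k, dle S (projT1 (a k)) j) ->
       List.In F (dops (dphi S j)) ->
       dopR (dphi S j) F (fun k => dgam S (projT1 (a k)) j (projT2 (a k))) xj ->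
       opint C F (fun k => pi (a k)) = pi (existT _ j xj)).
Arguments iso_limit {L} C S.

(* Main.v *)
Require Import Defs.
From mathcomp Require Import all_boot.
From Stdlib Require Import Classical ClassicalEpsilon FunctionalExtensionality PropExtensionality ProofIrrelevance.
Set Implicit Arguments.
Unset Strict Implicit.
Unset Printing Implicit Defensive.
Lemma choiceT (A B : Type) (R : A -> B -> Prop) :
  (forall x, exists y, R x y) -> exists f, forall x, R x (f x).
Proof.
move=> H; exists (fun x => proj1_sig (constructive_indefinite_description _ (H x))).
by move=> x; exact: (proj2_sig (constructive_indefinite_description _ (H x))).
Qed.

Lemma hom_teval (L : lang) (A A' : algebra L) (h : A -> A') (V : Type) (a : V -> A) t :
  is_hom h -> h (teval A a t) = teval A' (fun x => h (a x)) t.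
Proof.
move=> [hF hc]; elim: t => [x|c|F args IH] //=.
rewrite hF; congr (opint A' F); apply: functional_extensionality => k; exact: IH.
Qed.

Fixpoint qterms (L : lang) (V : Type) (phi : qf L V) : list (term L V) :=
  match phi with
  | qeq t s => t :: s :: nil
  | qnot p => qterms p
  | qand p q => qterms p ++ qterms q
  | qor p q => qterms p ++ qterms q
  end.

Lemma hom_qholds (L : lang) (A A' : algebra L) (h : A -> A') (V : Type) (a : V -> A) phi :
  is_hom h ->
  (forall t s, List.In t (qterms phi) -> List.In s (qterms phi) ->
     h (teval A a t) = h (teval A a s) -> teval A a t = teval A a s) ->
  (qholds A a phi <-> qholds A' (fun x => h (a x)) phi).
Proof.
move=> hh; elim: phi => [t s|p IH|p IHp q IHq|p IHp q IHq] /= Hi.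
- rewrite -!hom_teval //; split; first by move=> ->.
  by apply: Hi; simpl; auto.
- rewrite IH //.
- have Hp := IHp (fun t s Ht Hs => Hi t s (List.in_or_app _ _ _ (or_introl Ht)) (List.in_or_app _ _ _ (or_introl Hs))).
  have Hq := IHq (fun t s Ht Hs => Hi t s (List.in_or_app _ _ _ (or_intror Ht)) (List.in_or_app _ _ _ (or_intror Hs))).
  by rewrite Hp Hq.
- have Hp := IHp (fun t s Ht Hs => Hi t s (List.in_or_app _ _ _ (or_introl Ht)) (List.in_or_app _ _ _ (or_introl Hs))).
  have Hq := IHq (fun t s Ht Hs => Hi t s (List.in_or_app _ _ _ (or_intror Ht)) (List.in_or_app _ _ _ (or_intror Hs))).
  by rewrite Hp Hq.
Qed.

Lemma disc_univ (L : lang) (B C : algebra L) : discriminated C B -> Th_univ_sub B C.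
Proof.
move=> D n phi HB a.
have [h [hh hi]] := D (List.map (teval C a) (qterms phi)).
apply/(hom_qholds hh); last exact: HB.
by move=> t s Ht Hs; apply: hi; apply: List.in_map.
Qed.

Lemma univ_exist (L : lang) (B C : algebra L) : Th_univ_sub B C <-> Th_exist_sub C B.
Proof.
split.
- move=> H n phi [a Ha]; apply: NNPP => Hn.
  have : univ_true B n (qnot phi) by move=> b /= Hb; apply: Hn; exists b.
  by move/H/(_ a).
- move=> H n phi Hu a; apply: NNPP => Hn.
  have [b /= Hb] : exist_true B n (qnot phi) by apply: H; exists a.
  exact: Hb (Hu b).
Qed.

Definition dec (P : Prop) : bool := if excluded_middle_informative P then true else false.
Lemma decP P : dec P = true <-> P.
Proof. by rewrite /dec; case: excluded_middle_informative. Qed.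

Definition conjL (L : lang) (n : nat) (t0 : term L 'I_n) (l : list (term L 'I_n * term L 'I_n)) : qf L 'I_n :=
  List.fold_right (fun e acc => qand (qeq e.1 e.2) acc) (qeq t0 t0) l.
Definition disjL (L : lang) (n : nat) (t0 : term L 'I_n) (l : list (term L 'I_n * term L 'I_n)) : qf L 'I_n :=
  List.fold_right (fun e acc => qor (qeq e.1 e.2) acc) (qnot (qeq t0 t0)) l.

Lemma conjLP (L : lang) (A : algebra L) n (a : 'I_n -> A) t0 l :
  qholds A a (conjL t0 l) <-> forall e, List.In e l -> teval A a e.1 = teval A a e.2.
Proof.
elim: l => [|e l IH] /=; first by split.
rewrite IH; split; first by move=> [H1 H2] e' [<-|]; auto.
by move=> H; split; auto.
Qed.

Lemma disjLP (L : lang) (A : algebra L) n (a : 'I_n -> A) t0 l :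
  qholds A a (disjL t0 l) <-> exists e, List.In e l /\ teval A a e.1 = teval A a e.2.
Proof.
elim: l => [|e l IH] /=; first by split; [move=> H; exfalso; apply: H|move=> [e []]].
rewrite IH; split.
- by move=> [H|[e' [H1 H2]]]; [exists e; auto|exists e'; auto].
- by move=> [e' [[<-|H1] H2]]; [left|right; exists e'].
Qed.

Lemma univ_disc (L : lang) (B C : algebra L) :
  eq_noetherian B -> fin_gen C -> Th_univ_sub B C -> discriminated C B.
Proof.
move=> Noeth [n [g gs]] HU W.
case: (classic (inhabited C)) => [[c0]|nC]; last first.
  exists (fun c => False_rect _ (nC (inhabits c))); split; last first.
    by move=> x; exfalso; apply: nC; constructor.
  split; first by move=> F args; exfalso; apply: nC; constructor; exact: opint C F args.
  by move=> c; exfalso; apply: nC; constructor; exact: cint C c.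
have [tm tmP] := choiceT gs.
pose t0 := tm c0.
pose S : system L n := fun e => teval C g e.1 = teval C g e.2.
have [S0 [S0S VS]] := Noeth n S.
pose P := List.map (fun p => (tm p.1, tm p.2))
   (List.filter (fun p => dec (p.1 <> p.2)) (List.list_prod W W)).
pose phi := qor (qnot (conjL t0 S0)) (disjL t0 P).
have [b Hb] : exists b, ~ qholds B b phi.
  apply: NNPP => Hn.
  have Hall : univ_true B n phi.
    by move=> b; apply: NNPP => Hb; apply: Hn; exists b.
  have := HU n phi Hall g; rewrite /phi /= => [[Hc|Hd]].
    by apply: Hc; apply/conjLP => e /S0S.
  move/disjLP: Hd => [e [He Heq]].
  move/List.in_map_iff: He => [[x y] [Exy /List.filter_In [_ /decP nxy]]].
  subst e; apply: nxy; by rewrite /= -(tmP x) -(tmP y).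
have Hc : qholds B b (conjL t0 S0) by apply: NNPP => H; apply: Hb; left.
have Hd : ~ qholds B b (disjL t0 P) by move=> H; apply: Hb; right.
have Vb : Vset B S b by apply/VS => e He; move/conjLP: Hc; apply.
exists (fun c => teval B b (tm c)); split; first split.
- move=> F args.
  have : S (tm (opint C F args), tapp F (fun k => tm (args k))).
    rewrite /S /= tmP; congr (opint C F); apply: functional_extensionality => k.
    by rewrite tmP.
  by move/Vb.
- move=> c.
  have : S (tm (cint C c), tconst c) by rewrite /S /= tmP.
  by move/Vb.
- move=> x y Hx Hy Hxy; apply: NNPP => nxy; apply: Hd; apply/disjLP.
  exists (tm x, tm y); split => //.
  apply/List.in_map_iff; exists (x, y); split => //.
  by apply/List.filter_In; split; [apply/List.in_prod|apply/decP].
Qed.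

Lemma not_sub (X : Type) (P Q : X -> Prop) :
  ~ (forall x, P x -> Q x) -> exists x, P x /\ ~ Q x.
Proof.
move=> H; apply: NNPP => H2; apply: H => x Px; apply: NNPP => nQ; apply: H2; by exists x.
Qed.

Lemma not_all (X : Type) (P : X -> Prop) : ~ (forall x, P x) -> exists x, ~ P x.
Proof. move=> H; apply: NNPP => H2; apply: H => x; apply: NNPP => nP; apply: H2; by exists x. Qed.

Lemma univ_type (L : lang) (B C : algebra L) :
  fin_gen C -> Th_univ_sub B C ->
  exists (n : nat) (p : literal L n -> Prop),
    complete_atomic_type B n p /\ iso_term_quotient C (fun t s => p (true, t, s)).
Proof.
move=> [n [g gs]] HU; exists n, (fun l => lit_holds C g l); split; first split.
- by exists C; split => //; exists g.
- move=> q [M [HM [a Ha]]] Hpq [[b t] s] Hq; apply: NNPP => np.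
  have Hn : lit_holds C g (~~ b, t, s).
    by case: b np Hq => /= np Hq //; apply: NNPP.
  have H2 := Ha _ (Hpq _ Hn); have H1 := Ha _ Hq.
  by case: b {np Hq Hn} H1 H2 => /= H1 H2; apply: (H2 H1) || apply: (H1 H2).
- exists (teval C g); split; first by split.
  by split => //; exact: gs.
Qed.

Lemma type_univ (L : lang) (B C : algebra L) n (p : literal L n -> Prop) :
  complete_atomic_type B n p -> iso_term_quotient C (fun t s => p (true, t, s)) ->
  Th_univ_sub B C.
Proof.
move=> [[M [HM [a Ha]]] Hcomp] [h [hh [hs hk]]].
have pq : forall l, lit_holds M a l -> p l.
  apply: (Hcomp (fun l => lit_holds M a l)) => //.
  by exists M; split => //; exists a.
have key : forall t s, h t = h s <-> teval M a t = teval M a s.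
  move=> t s; rewrite hk; split; [exact: (Ha (true, t, s))|exact: (pq (true, t, s))].
have [tm tmP] := choiceT hs.
pose e := fun c => teval M a (tm c).
have he : is_hom e.
  split.
  - move=> F args; rewrite /e.
    have -> : opint M F (fun k => teval M a (tm (args k))) =
              teval M a (tapp F (fun k => tm (args k))) by [].
    apply/key; rewrite tmP.
    have -> : tapp F (fun k => tm (args k)) = opint (term_alg L 'I_n) F (fun k => tm (args k)) by [].
    rewrite hh.1; congr (opint C F); apply: functional_extensionality => k.
    by rewrite tmP.
  - move=> c; rewrite /e.
    have -> : cint M c = teval M a (tconst c) by [].
    apply/key; rewrite tmP.
    have -> : tconst c = cint (term_alg L 'I_n) c by [].
    by rewrite hh.2.
move=> m phi Hu a'.
apply/(hom_qholds he); last exact: HM.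
by move=> t s _ _ /key; rewrite !tmP.
Qed.

Lemma collect (L : lang) n (Ls : list (system L n)) (Q : term L 'I_n * term L 'I_n -> Prop) :
  (forall S', List.In S' Ls -> exists e, S' e /\ Q e) ->
  exists E, (forall e, List.In e E -> Q e) /\
            forall S', List.In S' Ls -> exists e, List.In e E /\ S' e.
Proof.
elim: Ls => [|S1 Ls IH] H; first by exists nil; split.
have [e [He Qe]] := H S1 (or_introl erefl).
have [E [HE HE2]] := IH (fun S' HS => H S' (or_intror HS)).
exists (e :: E); split; first by move=> e' [<-|]; auto.
move=> S' [<-|HS]; first by exists e; split; [left|].
by have [e' [? ?]] := HE2 S' HS; exists e'; split; [right|].
Qed.

Lemma univ_coord (L : lang) (B C : algebra L) :
  eq_noetherian B -> fin_gen C -> Th_univ_sub B C ->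
  exists (n : nat) (S : system L n),
    irreducible B (Vset B S) /\ iso_coord_alg B C (Vset B S).
Proof.
move=> Noeth fg HU; have D := univ_disc Noeth fg HU.
move: fg => [n [g gs]].
pose S : system L n := fun e => teval C g e.1 = teval C g e.2.
have Ybh : forall h : C -> B, is_hom h -> Vset B S (fun k => h (g k)).
  by move=> h hh e He; rewrite -!hom_teval // He.
have K : forall t s, teval C g t = teval C g s <->
                     (forall b, Vset B S b -> teval B b t = teval B b s).
  move=> t s; split; first by move=> H b Hb; apply: (Hb (t, s)).
  move=> H; apply: NNPP => ne.
  have [h [hh hi]] := D (teval C g t :: teval C g s :: nil).
  have := H _ (Ybh h hh); rewrite -!hom_teval // => /hi.
  by move=> H'; apply: ne; apply: H'; simpl; auto.
exists n, S; split; last first.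
  exists (teval C g); split; first by split.
  by split; [exact: gs|exact: K].
split.
  have [h [hh _]] := D nil; exists (fun k => h (g k)); exact: Ybh.
move=> [Y1 [Y2 [[J1 [f1 E1]] [[J2 [f2 E2]] [_ [nsub1 [_ [nsub2 Hun]]]]]]]].
have get : forall J (f : J -> list (system L n)) (Z : ('I_n -> B) -> Prop),
    (forall b, Z b <-> forall j, exists S', List.In S' (f j) /\ Vset B S' b) ->
    ~ (forall b, Vset B S b -> Z b) ->
    exists j, forall S', List.In S' (f j) ->
      exists e, S' e /\ teval C g e.1 <> teval C g e.2.
  move=> J f Z EZ /not_sub [b1 [Yb1 nZ]].
  have : ~ (forall j, exists S', List.In S' (f j) /\ Vset B S' b1) by rewrite -EZ.
  move/not_all => [j Hj]; exists j => S' HS'.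
  have : ~ Vset B S' b1 by move=> HV; apply: Hj; exists S'.
  move/not_sub => [e [Se ne]]; exists e; split => //.
  by move/K => HK; apply: ne; apply: HK.
have [j1 H1] := get _ _ _ E1 nsub1.
have [j2 H2] := get _ _ _ E2 nsub2.
have [E [QE HE]] := collect (Ls := f1 j1 ++ f2 j2)
   (Q := fun e => teval C g e.1 <> teval C g e.2)
   (fun S' HS => match List.in_app_or _ _ _ HS with
                 | or_introl H => H1 S' H | or_intror H => H2 S' H end).
have [h [hh hi]] := D (List.flat_map (fun e => teval C g e.1 :: teval C g e.2 :: nil) E).
pose b := fun k => h (g k).
have hit : forall S', List.In S' (f1 j1 ++ f2 j2) -> ~ Vset B S' b.
  move=> S' HS HV; have [e [Ee Se]] := HE S' HS.
  have := HV e Se; rewrite /b -!hom_teval // => /hi Heq.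
  apply: (QE e Ee); apply: Heq; apply/List.in_flat_map; exists e; split => //=; auto.
case: (proj1 (Hun b) (Ybh h hh)) => [/E1/(_ j1)|/E2/(_ j2)] [S' [HS HV]].
  by apply: (hit S') => //; apply: List.in_or_app; left.
by apply: (hit S') => //; apply: List.in_or_app; right.
Qed.

Lemma coord_disc (L : lang) (B C : algebra L) n (S : system L n) :
  irreducible B (Vset B S) -> iso_coord_alg B C (Vset B S) -> discriminated C B.
Proof.
move=> [Yne Irr] [h [hh [hs hk]]].
pose good := fun e : term L 'I_n * term L 'I_n =>
  exists b', Vset B S b' /\ teval B b' e.1 <> teval B b' e.2.
pose sys := fun e : term L 'I_n * term L 'I_n => (fun x => S x \/ x = e) : system L n.
have A : forall E, exists b, Vset B S b /\
    forall e, List.In e E -> good e -> teval B b e.1 <> teval B b e.2.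
  elim => [|e E' [b0 [Yb0 Hb0]]]; first by move: Yne => [b Hb]; exists b; split.
  case: (classic (good e)) => ge; last first.
    exists b0; split => // e' [<-|He'] //; exact: Hb0.
  apply: NNPP => nX; apply: Irr.
  exists (Vset B (sys e)),
    (fun b => Vset B S b /\ exists e', List.In e' E' /\ good e' /\
                                      teval B b e'.1 = teval B b e'.2).
  split.
    exists unit, (fun _ => sys e :: nil) => b; split.
      by move=> H _; exists (sys e); split; [left|].
    by move=> /(_ tt) [S' [[<-|[]] HV]].
  split.
    exists unit, (fun _ => List.map sys (List.filter (fun e' => dec (good e')) E')) => b.
    split.
      move=> [Yb [e' [He' [ge' Heq]]]] _; exists (sys e'); split.
        by apply: List.in_map; apply/List.filter_In; split => //; apply/decP.
      by move=> x [Sx|->] //; exact: Yb.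
    move=> /(_ tt) [S' [/List.in_map_iff [e' [<- /List.filter_In [He' /decP ge']]] HV]].
    split; first by move=> x Sx; apply: HV; left.
    by exists e'; split => //; split => //; apply: HV; right.
  split; first by move=> b HV x Sx; apply: HV; left.
  split.
    move=> H; move: ge => [b' [Yb' ne]]; apply: ne; apply: (H b' Yb' e); by right.
  split; first by move=> b [].
  split.
    move=> H; have [_ [e' [He' [ge' Heq]]]] := H b0 Yb0; exact: Hb0 e' He' ge' Heq.
  move=> b; split; last first.
    by move=> [HV|[Yb _]] //; move=> x Sx; apply: HV; left.
  move=> Yb; apply: NNPP => nU; apply: nX; exists b; split => //.
  move=> e'' [<-|He''] ge'' Heq.
    by apply: nU; left => x [Sx|->] //; exact: Yb.
  by apply: nU; right; split => //; exists e''.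
move=> W.
have [tm tmP] := choiceT hs.
have [b [Yb Hb]] := A (List.map (fun p => (tm p.1, tm p.2)) (List.list_prod W W)).
exists (fun c => teval B b (tm c)); split; first split.
- move=> F args.
  have : h (tm (opint C F args)) = h (tapp F (fun k => tm (args k))).
    rewrite tmP.
    have -> : tapp F (fun k => tm (args k)) = opint (term_alg L 'I_n) F (fun k => tm (args k)) by [].
    rewrite hh.1; congr (opint C F); apply: functional_extensionality => k; by rewrite tmP.
  by move/hk/(_ b Yb).
- move=> c.
  have : h (tm (cint C c)) = h (tconst c).
    rewrite tmP.
    have -> : tconst c = cint (term_alg L 'I_n) c by [].
    by rewrite hh.2.
  by move/hk/(_ b Yb).
- move=> x y Hx Hy Heq; apply: NNPP => nxy.
  apply: (Hb (tm x, tm y)) => //.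
    by apply/List.in_map_iff; exists (x, y); split => //; apply/List.in_prod.
  have : ~ (forall b', Vset B S b' -> teval B b' (tm x) = teval B b' (tm y)).
    by rewrite -hk !tmP.
  by move/not_sub => [b' [Yb' ne]]; exists b'.
Qed.

Lemma inP' (T : eqType) (x : T) (s : seq T) : x \in s -> List.In x s.
Proof. elim: s => //= y s IH; rewrite in_cons => /orP [/eqP ->|/IH]; auto. Qed.

Lemma limit_univ (L : lang) (B C : algebra L) (S : dsystem L) :
  limit_over B S -> iso_limit C S -> Th_univ_sub B C.
Proof.
move=> [[Hrefl [Htr [_ [[i00 _] [Hdir [_ [Hid [Hcomp [Hpres [Hcn Hop]]]]]]]]]] Hreal].
move=> [pi [pis [pik [pic pio]]]].
pose mk := fun j (x : 'I_(dnv (dphi S j))) => (existT _ j x : dnode S).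
have sigeta : forall p : dnode S, mk (projT1 p) (projT2 p) = p by case.
have ub : forall k (f : 'I_k -> dI S) i0, exists j, dle S i0 j /\ forall x, dle S (f x) j.
  move=> k f i0.
  have : exists j, dle S i0 j /\ forall x, List.In x (enum 'I_k) -> dle S (f x) j.
    elim: (enum 'I_k) => [|x l [j [H1 H2]]]; first by exists i0; split.
    have [m [Hjm Hxm]] := Hdir j (f x); exists m; split; first exact: Htr H1 Hjm.
    by move=> y [<-|Hy] //; apply: Htr (H2 y Hy) Hjm.
  move=> [j [H1 H2]]; exists j; split => // x; apply: H2; apply: inP'; by rewrite mem_enum.
have pi_gam : forall i j x, dle S i j -> pi (mk j (dgam S i j x)) = pi (mk i x).
  move=> i j x Hij; apply/pik; exists j => /=; split; first exact: Hrefl.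
  by split => //; rewrite Hid.
have eqnode : forall jt xt js xs j', dle S jt j' -> dle S js j' ->
    (pi (mk jt xt) = pi (mk js xs) <-> dgam S jt j' xt = dgam S js j' xs).
  move=> jt xt js xs j' H1 H2; split; last by move=> E; apply/pik; exists j'.
  move/pik => [k [Hk1 [Hk2 /= Heq]]].
  have [m [Hkm Hj'm]] := Hdir k j'.
  have [Hinj _] := Hpres j' m Hj'm.
  apply: NNPP => ne; apply: (Hinj _ _ ne).
  rewrite !Hcomp // -(Hcomp _ _ _ Hk1 Hkm) -(Hcomp _ _ _ Hk2 Hkm) Heq //.
move=> n phi Hu a.
have [nd ndP] := choiceT pis.
have [i0 [_ Hi0]] := ub n (fun k => projT1 (nd (a k))) i00.
pose z := fun k => dgam S (projT1 (nd (a k))) i0 (projT2 (nd (a k))).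
pose GT := fun t j (x : 'I_(dnv (dphi S j))) =>
  dle S i0 j /\ pi (mk j x) = teval C a t /\
  forall j', dle S j j' -> forall (M : algebra L) v, dsat M (dphi S j') v ->
    teval M (fun k => v (dgam S i0 j' (z k))) t = v (dgam S j j' x).
have HT : forall t, exists p : dnode S, GT t (projT1 p) (projT2 p).
  elim => [k|c|F args IH].
  - exists (mk i0 (z k)); split; first exact: Hrefl.
    split => //=; rewrite /z pi_gam // sigeta; exact: ndP.
  - have [i [x [Hin Hdc]]] := Hcn c.
    have [k [Hik Hi0k]] := Hdir i i0.
    exists (mk k (dgam S i k x)); split => //=.
    split; first by rewrite pi_gam //; exact: pic.
    move=> j' Hkj' M v [_ [_ Hc3]].
    have Hij' := Htr _ _ _ Hik Hkj'.
    rewrite Hcomp //.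
    have [_ [_ Hp3]] := Hpres i j' Hij'.
    have [Hin' Hiff] := Hp3 c Hin x.
    by symmetry; apply/(Hc3 c Hin'); apply/Hiff.
  - have [pk pkP] := choiceT IH.
    have [j0 [Hi0j0 Hkj0]] := ub _ (fun k => projT1 (pk k)) i0.
    pose xs := fun k => dgam S (projT1 (pk k)) j0 (projT2 (pk k)).
    have [j [x [Hj0j [Fin Hdop0]]]] := Hop F j0 xs.
    have Efun : (fun k => dgam S j0 j (xs k)) =
                (fun k => dgam S (projT1 (pk k)) j (projT2 (pk k))).
      by apply: functional_extensionality => k; rewrite /xs Hcomp.
    have Hdop := Hdop0; rewrite Efun in Hdop.
    have Hkj : forall k, dle S (projT1 (pk k)) j by move=> k; exact: Htr (Hkj0 k) Hj0j.
    exists (mk j x); split; first exact: Htr Hi0j0 Hj0j.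
    split.
      rewrite /= -(pio F pk j x Hkj Fin Hdop); congr (opint C F).
      apply: functional_extensionality => k; have [_ [Hpi _]] := pkP k.
      by rewrite -Hpi sigeta.
    move=> j' Hjj' M v Hv /=.
    have [_ [Hv2 _]] := Hv.
    have [_ [Hp2 _]] := Hpres j j' Hjj'.
    have [Fin' Hiff] := Hp2 F Fin (fun k => dgam S j0 j (xs k)) x.
    have H1 := (proj1 (Hv2 F Fin' _ _)) (proj1 Hiff Hdop0).
    rewrite -H1; congr (opint M F); apply: functional_extensionality => k.
    have [_ [_ H3]] := pkP k.
    have Hkj' : dle S (projT1 (pk k)) j' by exact: Htr (Hkj k) Hjj'.
    by rewrite (H3 j' Hkj' M v Hv) /xs !Hcomp //; exact: Htr Hj0j Hjj'.
pose GF := fun (phi : qf L 'I_n) j => dle S i0 j /\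
  forall j', dle S j j' -> forall v, dsat B (dphi S j') v ->
    (qholds C a phi <-> qholds B (fun k => v (dgam S i0 j' (z k))) phi).
have HF : forall phi, exists j, GF phi j.
  elim => [t s|p [j [Hj IH]]|p [jp [Hjp IHp]] q [jq [Hjq IHq]]|p [jp [Hjp IHp]] q [jq [Hjq IHq]]].
  - have [[jt xt] [Ht1 [Ht2 Ht3]]] := HT t.
    have [[js xs] [Hs1 [Hs2 Hs3]]] := HT s.
    have [j [Htj Hsj]] := Hdir jt js.
    exists j; split; first exact: Htr Ht1 Htj.
    move=> j' Hjj' v Hv /=.
    have Htj' := Htr _ _ _ Htj Hjj'; have Hsj' := Htr _ _ _ Hsj Hjj'.
    rewrite (Ht3 j' Htj' B v Hv) (Hs3 j' Hsj' B v Hv) /=.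
    rewrite -Ht2 -Hs2 (eqnode _ _ _ _ j') //; split; first by move=> ->.
    move=> E; apply: NNPP => ne; exact: (proj1 Hv _ _ ne E).
  - exists j; split; first exact: Hj.
    move=> j' Hjj' v Hv /=; by rewrite (IH j' Hjj' v Hv).
  - have [j [H1 H2]] := Hdir jp jq; exists j; split; first exact: Htr Hjp H1.
    move=> j' Hjj' v Hv /=.
    by rewrite (IHp j' (Htr _ _ _ H1 Hjj') v Hv) (IHq j' (Htr _ _ _ H2 Hjj') v Hv).
  - have [j [H1 H2]] := Hdir jp jq; exists j; split; first exact: Htr Hjp H1.
    move=> j' Hjj' v Hv /=.
    by rewrite (IHp j' (Htr _ _ _ H1 Hjj') v Hv) (IHq j' (Htr _ _ _ H2 Hjj') v Hv).
have [j [_ Hj]] := HF phi.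
have [v Hv] := Hreal j.
by apply/(Hj j (Hrefl j) v Hv); apply: Hu.
Qed.

Definition finL (X : Type) (P : X -> Prop) := exists l : list X, forall x, P x <-> List.In x l.

Lemma finL_or (X : Type) (P Q : X -> Prop) : finL P -> finL Q -> finL (fun x => P x \/ Q x).
Proof.
move=> [l1 H1] [l2 H2]; exists (l1 ++ l2) => x; rewrite H1 H2; split.
  by move=> H; apply: List.in_or_app.
exact: List.in_app_or.
Qed.

Lemma finL_eq (X : Type) (a : X) : finL (fun x => x = a).
Proof. by exists (a :: nil) => x /=; split; [move=> ->; left|move=> [->|[]]]. Qed.

Lemma finL_F (X : Type) : finL (fun _ : X => False).
Proof. by exists nil. Qed.

Definition I0elim (T : Type) (y : 'I_0) : T.
Proof. exfalso; case: y => m; by rewrite ltn0. Defined.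

Lemma finE (X : Type) (P : X -> Prop) : finL P ->
  exists k (e : 'I_k -> X), injective e /\ forall x, P x <-> exists y, e y = x.
Proof.
move=> [l Hl].
suff : exists k (e : 'I_k -> X), injective e /\ forall x, List.In x l <-> exists y, e y = x.
  by move=> [k [e [ei er]]]; exists k, e; split => // x; rewrite Hl.
elim: l {Hl} => [|a l [k [e [ei er]]]].
  exists 0, (@I0elim X).
  split; first by move=> [m Hm].
  by move=> x; split => //; move=> [[m Hm]].
case: (classic (List.In a l)) => Hal.
  exists k, e; split => // x; rewrite -er /=; split; last by auto.
  by move=> [<-|].
exists k.+1, (fun y => match unlift ord0 y with Some y' => e y' | None => a end).
split.
  move=> y1 y2; case: (unliftP ord0 y1) => [j1 E1|E1]; case: (unliftP ord0 y2) => [j2 E2|E2];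
    rewrite ?E1 ?E2 //.
  - by move/ei => ->.
  - by move=> E; exfalso; apply: Hal; apply/er; exists j1.
  - by move=> E; exfalso; apply: Hal; apply/er; exists j2.
move=> x /=; split.
  move=> [<-|/er [y <-]]; first by exists ord0; rewrite unlift_none.
  by exists (lift ord0 y); rewrite liftK.
move=> [y]; case: (unliftP ord0 y) => [j _|_] <-; last by left.
by right; apply/er; exists j.
Qed.

Record idx (L : lang) (C : algebra L) (c0 : C) := Idx {
  iE : C -> Prop; iO : op L -> Prop; iK : cst L -> Prop;
  iEf : finL iE; iOf : finL iO; iKf : finL iK; iE0 : iE c0 }.

Arguments iE {L C c0} i _.
Arguments iO {L C c0} i _.
Arguments iK {L C c0} i _.
Arguments iEf {L C c0} i.
Arguments iOf {L C c0} i.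
Arguments iKf {L C c0} i.
Arguments iE0 {L C c0} i.
Unset Implicit Arguments.

Definition enumE {L : lang} {C : algebra L} {c0 : C} (i : idx c0) :=
  constructive_indefinite_description _ (finE (iEf i)).
Definition nv {L : lang} {C : algebra L} {c0 : C} (i : idx c0) : nat := proj1_sig (enumE i).
Definition enumE2 {L : lang} {C : algebra L} {c0 : C} (i : idx c0) :=
  constructive_indefinite_description _ (proj2_sig (enumE i)).
Definition en {L : lang} {C : algebra L} {c0 : C} (i : idx c0) : 'I_(nv i) -> C :=
  proj1_sig (enumE2 i).
Lemma en_spec {L : lang} {C : algebra L} {c0 : C} (i : idx c0) :
  injective (en i) /\ forall x, iE i x <-> exists y, en i y = x.
Proof. exact: proj2_sig (enumE2 i). Qed.
Lemma en_inj {L : lang} {C : algebra L} {c0 : C} (i : idx c0) : injective (en i).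
Proof. exact: (en_spec i).1. Qed.
Lemma en_in {L : lang} {C : algebra L} {c0 : C} (i : idx c0) y : iE i (en i y).
Proof. by apply/(en_spec i).2; exists y. Qed.

Definition w0 {L : lang} {C : algebra L} {c0 : C} (i : idx c0) : 'I_(nv i) :=
  proj1_sig (constructive_indefinite_description _ (proj1 ((en_spec i).2 c0) (iE0 i))).
Definition pre {L : lang} {C : algebra L} {c0 : C} (i : idx c0) (c : C) : 'I_(nv i) :=
  epsilon (inhabits (w0 i)) (fun y => en i y = c).
Lemma preP {L : lang} {C : algebra L} {c0 : C} (i : idx c0) c : iE i c -> en i (pre i c) = c.
Proof. move=> Hc; have H := proj1 ((en_spec i).2 c) Hc; exact: (epsilon_spec (inhabits (w0 i)) (fun y => en i y = c) H). Qed.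
Lemma pre_en {L : lang} {C : algebra L} {c0 : C} (i : idx c0) y : pre i (en i y) = y.
Proof. by apply: en_inj; rewrite preP //; exact: en_in. Qed.

Definition lO {L : lang} {C : algebra L} {c0 : C} (i : idx c0) :=
  proj1_sig (constructive_indefinite_description _ (iOf i)).
Lemma lOP {L : lang} {C : algebra L} {c0 : C} (i : idx c0) F : iO i F <-> List.In F (lO i).
Proof. exact: (proj2_sig (constructive_indefinite_description _ (iOf i)) F). Qed.
Definition lK {L : lang} {C : algebra L} {c0 : C} (i : idx c0) :=
  proj1_sig (constructive_indefinite_description _ (iKf i)).
Lemma lKP {L : lang} {C : algebra L} {c0 : C} (i : idx c0) c : iK i c <-> List.In c (lK i).
Proof. exact: (proj2_sig (constructive_indefinite_description _ (iKf i)) c). Qed.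

Definition ile {L : lang} {C : algebra L} {c0 : C} (i j : idx c0) : Prop :=
  (forall x, iE i x -> iE j x) /\ (forall F, iO i F -> iO j F) /\ (forall c, iK i c -> iK j c).

Definition iphi {L : lang} {C : algebra L} {c0 : C} (i : idx c0) : diagram L :=
  @Diagram L (lO i) (lK i) (nv i)
    (fun F xs x0 => opint C F (fun k => en i (xs k)) = en i x0)
    (fun c x => en i x = cint C c).

Definition igam {L : lang} {C : algebra L} {c0 : C} (i j : idx c0) (x : 'I_(nv i)) : 'I_(nv j) :=
  pre j (en i x).

Definition SYS {L : lang} {C : algebra L} {c0 : C} : dsystem L :=
  @DSystem L (idx c0) (@ile L C c0) (@iphi L C c0) (@igam L C c0).

Definition ijoin {L : lang} {C : algebra L} {c0 : C} (i j : idx c0) : idx c0 :=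
  @Idx L C c0 (fun x => iE i x \/ iE j x) (fun x => iO i x \/ iO j x) (fun x => iK i x \/ iK j x)
    (finL_or (iEf i) (iEf j)) (finL_or (iOf i) (iOf j)) (finL_or (iKf i) (iKf j))
    (or_introl (iE0 i)).

Definition ione {L : lang} {C : algebra L} {c0 : C} (c : C) : idx c0 :=
  @Idx L C c0 (fun x => x = c0 \/ x = c) (fun _ => False) (fun _ => False)
    (finL_or (finL_eq c0) (finL_eq c)) (@finL_F _) (@finL_F _) (or_introl erefl).

Definition icst {L : lang} {C : algebra L} {c0 : C} (c : cst L) : idx c0 :=
  @Idx L C c0 (fun x => x = c0 \/ x = cint C c) (fun _ => False) (fun c' => c' = c)
    (finL_or (finL_eq c0) (finL_eq (cint C c))) (@finL_F _) (finL_eq c) (or_introl erefl).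

Definition iop {L : lang} {C : algebra L} {c0 : C} (F : op L) (c : C) : idx c0 :=
  @Idx L C c0 (fun x => x = c0 \/ x = c) (fun F' => F' = F) (fun _ => False)
    (finL_or (finL_eq c0) (finL_eq c)) (finL_eq F) (@finL_F _) (or_introl erefl).

Lemma ile_antisym {L : lang} {C : algebra L} {c0 : C} (i j : idx c0) :
  ile i j -> ile j i -> i = j.
Proof.
case: i => Ei Oi Ki fEi fOi fKi E0i; case: j => Ej Oj Kj fEj fOj fKj E0j.
rewrite /ile /= => [[h1 [h2 h3]] [g1 [g2 g3]]].
have eE : Ei = Ej.
  by apply: functional_extensionality => x; apply: propositional_extensionality; split; auto.
have eO : Oi = Oj.
  by apply: functional_extensionality => x; apply: propositional_extensionality; split; auto.
have eK : Ki = Kj.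
  by apply: functional_extensionality => x; apply: propositional_extensionality; split; auto.
subst.
by rewrite (proof_irrelevance _ fEi fEj) (proof_irrelevance _ fOi fOj)
   (proof_irrelevance _ fKi fKj) (proof_irrelevance _ E0i E0j).
Qed.

Lemma inP'' (T : eqType) (x : T) (s : seq T) : x \in s -> List.In x s.
Proof. elim: s => //= y s IH; rewrite in_cons => /orP [/eqP ->|/IH]; auto. Qed.

Lemma sys_is (L : lang) (C : algebra L) (c0 : C) : is_dsystem (@SYS L C c0).
Proof.
have rw : forall (i j : idx c0) x, ile i j -> en j (igam i j x) = en i x.
  by move=> i j x [H _]; rewrite /igam preP //; apply: H; exact: en_in.
split; first by move=> i; split; [|split].
split; first by move=> i j k [a1 [a2 a3]] [b1 [b2 b3]]; split; [|split]; auto.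
split; first exact: ile_antisym.
split; first by exists (@ione L C c0 c0).
split; first by move=> i j; exists (ijoin i j); split; (split; [|split]); move=> *; [left|left|left|right|right|right].
split.
  move=> i; exists C; exists (en i); split.
    by move=> x y nxy E; apply: nxy; exact: en_inj.
  by split.
split; first by move=> i x; rewrite /= /igam pre_en.
split.
  move=> i j k Hij Hjk x; rewrite /= /igam preP //.
  by case: Hij => [H _]; apply: H; exact: en_in.
split.
  move=> i j Hij; split.
    move=> x y nxy /= E; apply: nxy; apply: en_inj.
    by rewrite -(rw i j x Hij) -(rw i j y Hij) E.
  split.
    move=> F /= /lOP HF xs x0; split; first by apply/lOP; case: Hij => [_ [H _]]; auto.
    have -> : (fun k => en j (igam i j (xs k))) = (fun k => en i (xs k)).
      by apply: functional_extensionality => k; rewrite rw.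
    by rewrite rw.
  move=> c /= /lKP Hc x; split; first by apply/lKP; case: Hij => [_ [_ H]]; auto.
  by rewrite rw.
split.
  move=> c; exists (@icst L C c0 c), (pre (@icst L C c0 c) (cint C c)); split.
    by apply/lKP.
  by rewrite /= preP //; right.
move=> F i xs.
pose j := ijoin i (@iop L C c0 F (opint C F (fun k => en i (xs k)))).
have Hij : ile i j by split; [|split]; move=> *; left.
exists j, (pre j (opint C F (fun k => en i (xs k)))); split => //.
split; first by apply/lOP; right.
rewrite /= preP; last by right; right.
congr (opint C F); apply: functional_extensionality => k.
by rewrite -/(igam i j (xs k)) rw.
Qed.

Lemma disc_limit (L : lang) (B C : algebra L) :
  discriminated C B -> exists S : dsystem L, limit_over B S /\ iso_limit C S.
Proof.
move=> D.
case: (classic (inhabited C)) => [[c0]|nC]; last first.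
  have E : forall T, C -> T by move=> T c; exfalso; apply: nC; constructor.
  pose d := @Diagram L nil nil 0 (fun _ _ _ => False) (fun _ _ => False).
  exists (@DSystem L unit (fun _ _ => True) (fun _ => d) (fun _ _ x => x)).
  split.
    split; last by move=> i; exists (@I0elim B); split => //; move=> x; exact: I0elim.
    split => //; split => //; split; first by move=> [] [].
    split; first by exists tt.
    split; first by move=> i j; exists tt.
    split; first by move=> i; exists B; exists (@I0elim B); split => //; move=> x; exact: I0elim.
    split => //; split => //.
    split; first by move=> i j _; split; [move=> x; exact: I0elim|split].
    split; first by move=> c; apply: E; exact: cint C c.
    by move=> F i xs; apply: E; exact: opint C F (fun k => I0elim C (xs k)).
  exists (fun p => I0elim C (projT2 p)).
  split; first by move=> c; apply: E.
  split; first by move=> [? x]; exact: I0elim.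
  split; first by move=> c i x; exact: I0elim.
  by move=> F a j x; exact: I0elim.
have rw : forall (i j : idx c0) x, ile i j -> en j (igam i j x) = en i x.
  by move=> i j x [H _]; rewrite /igam preP //; apply: H; exact: en_in.
exists (@SYS L C c0); split.
  split; first exact: sys_is.
  move=> i.
  pose W := List.map (en i) (enum 'I_(nv i)) ++
    (List.flat_map (fun F => List.map (fun f : {ffun 'I_(arity F) -> 'I_(nv i)} =>
        opint C F (fun k => en i (f k))) (enum {ffun 'I_(arity F) -> 'I_(nv i)})) (lO i) ++
     List.map (cint C) (lK i)).
  have W1 : forall y, List.In (en i y) W.
    by move=> y; apply: List.in_or_app; left; apply: List.in_map; apply: inP''; rewrite mem_enum.
  have W2 : forall F xs, List.In F (lO i) -> List.In (opint C F (fun k => en i (xs k))) W.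
    move=> F xs HF; apply: List.in_or_app; right; apply: List.in_or_app; left.
    apply/List.in_flat_map; exists F; split => //.
    apply/List.in_map_iff; exists (finfun xs); split; last by apply: inP''; rewrite mem_enum.
    by congr (opint C F); apply: functional_extensionality => k; rewrite ffunE.
  have W3 : forall c, List.In c (lK i) -> List.In (cint C c) W.
    move=> c Hc; apply: List.in_or_app; right; apply: List.in_or_app; right.
    exact: List.in_map.
  have [h [hh hi]] := D W.
  exists (fun x => h (en i x)); split.
    by move=> x y nxy E; apply: nxy; apply: en_inj; apply: hi.
  split.
    move=> F /= HF xs x0; rewrite -hh.1; split; first by move=> ->.
    by apply: hi => //; apply: W2.
  move=> c /= Hc x; rewrite -hh.2; split; first by move=> ->.
  by apply: hi => //; apply: W3.
exists (fun p => en (projT1 p) (projT2 p)).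
split.
  move=> c; exists (existT _ (@ione L C c0 c) (pre (@ione L C c0 c) c)) => /=.
  by rewrite preP //; right.
split.
  move=> [i x] [j y] /=; split.
    move=> E; exists (ijoin i j); split; first by split; [|split]; move=> *; left.
    split; first by split; [|split]; move=> *; right.
    by rewrite /= /igam E.
  move=> [k [Hik [Hjk E]]].
  by rewrite -(rw i k x Hik) -(rw j k y Hjk) /= E.
split; first by move=> c i x _ /=.
move=> F a j xj Hle HF /= Hd; rewrite -Hd.
congr (opint C F); apply: functional_extensionality => k.
rewrite /= /igam preP //; case: (Hle k) => [H _]; apply: H; exact: en_in.
Qed.

From mathcomp Require Import boolp classical_sets filter.
Set Implicit Arguments.

Lemma disc_ultra (L : lang) (B C : algebra L) :
  discriminated C B -> embeds_in_ultrapower C B.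
Proof.
move=> D.
pose F0 : set_system (list C) := fun P => exists W0, forall W, List.incl W0 W -> P W.
have FF : Filter F0.
  constructor.
  - by exists nil.
  - move=> P Q [W1 H1] [W2 H2]; exists (W1 ++ W2) => W HW; split.
      by apply: H1 => x Hx; apply: HW; apply: List.in_or_app; left.
    by apply: H2 => x Hx; apply: HW; apply: List.in_or_app; right.
  - by move=> P Q PQ [W0 H]; exists W0 => W /H /PQ.
have PF : ProperFilter F0.
  by apply: Build_ProperFilter => //; move=> [W0 H]; apply: (H W0).
have [G [UG sub]] := ultraFilterLemma PF.
have FG : Filter G by case: UG => [[_ ?]] _.
have [hW hWP] := choiceT D.
exists (list C), G, (fun c W => hW W c).
have GT : forall P : list C -> Prop, (forall i, P i) -> G P.
  by move=> P HP; apply: (filterS (P := setT)) => //; exact: filterT.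
split.
  split; first exact: GT.
  split; first by move=> H; apply: (filter_not_empty G).
  split; first by move=> P Q HP PQ; exact: filterS PQ HP.
  split; first by move=> P Q HP HQ; exact: filterI HP HQ.
  by move=> P; exact: in_ultra_setVsetC.
split; first by move=> F args; apply: GT => W; have [[h1 _] _] := hWP W.
split; first by move=> c; apply: GT => W; have [[_ h2] _] := hWP W.
move=> x y Hxy; apply: NNPP => nxy.
have Gi : G (fun W => List.incl (x :: y :: nil) W) by apply: sub; exists (x :: y :: nil).
have := filterI Gi Hxy; move=> H0.
apply: (filter_not_empty G).
have sub0 : ((fun W => List.incl (x :: y :: nil) W) `&` (fun W => hW W x = hW W y) `<=` set0)%classic.
  move=> W [Hi He]; apply: nxy; apply: (proj2 (hWP W)) => //; apply: Hi; simpl; auto.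
exact: (@filterS _ G FG _ set0 sub0 (H0 FG)).
Qed.

Lemma inP (T : eqType) (x : T) (s : seq T) : x \in s -> List.In x s.
Proof. elim: s => //= y s IH; rewrite in_cons => /orP [/eqP ->|/IH]; auto. Qed.

Lemma U_all (I : Type) (U : (I -> Prop) -> Prop) (P : I -> Prop) :
  ultrafilter U -> (forall i, P i) -> U P.
Proof. by move=> [UT [_ [US _]]] HP; apply: (US _ _ UT) => i _; apply: HP. Qed.

Lemma U_ord (I : Type) (U : (I -> Prop) -> Prop) k (P : 'I_k -> I -> Prop) :
  ultrafilter U -> (forall j, U (P j)) -> U (fun i => forall j, P j i).
Proof.
move=> UU HP.
have : U (fun i => forall j, List.In j (enum 'I_k) -> P j i).
  elim: (enum 'I_k) => [|j l IH]; first by apply: U_all.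
  move: UU => [_ [_ [US [UI _]]]].
  apply: (US _ _ (UI _ _ (HP j) IH)) => i [H1 H2] j' [<-|]; auto.
move: UU => [_ [_ [US _]]] H; apply: (US _ _ H) => i H' j; apply: H'.
by apply: inP; rewrite mem_enum.
Qed.

Lemma ultra_univ (L : lang) (B C : algebra L) :
  embeds_in_ultrapower C B -> Th_univ_sub B C.
Proof.
move=> [I [U [h [UU [hF [hc hi]]]]]].
move: (UU) => [UT [UF [US [UI UC]]]].
move=> n phi Hu a.
pose ai := fun i (k : 'I_n) => h (a k) i.
have Ht : forall t, U (fun i => h (teval C a t) i = teval B (ai i) t).
  elim => [x|c|F args IH] /=.
  - by apply: (U_all UU).
  - exact: hc.
  - have H := U_ord UU IH.
    apply: (US _ _ (UI _ _ (hF F (fun k => teval C a (args k))) H)) => i [H1 H2].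
    by rewrite H1; congr (opint B F); apply: functional_extensionality => k.
have Unot : forall P, ~ U P <-> U (fun i => ~ P i).
  move=> P; split; first by case: (UC P).
  move=> H1 H2; apply: UF; apply: (US _ _ (UI _ _ H1 H2)) => i [? ?]; auto.
have Hq : forall phi : qf L 'I_n, qholds C a phi <-> U (fun i => qholds B (ai i) phi).
  elim => [t s|p IH|p IHp q IHq|p IHp q IHq] /=.
  - split.
      move=> Heq; apply: (US _ _ (UI _ _ (Ht t) (Ht s))) => i [H1 H2].
      by rewrite -H1 -H2 Heq.
    move=> H; apply: hi; apply: (US _ _ (UI _ _ H (UI _ _ (Ht t) (Ht s)))).
    by move=> i [H1 [H2 H3]]; rewrite H2 H3.
  - by rewrite IH Unot.
  - rewrite IHp IHq; split; first by move=> [H1 H2]; exact: UI _ _ H1 H2.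
    by move=> H; split; apply: (US _ _ H) => i [].
  - rewrite IHp IHq; split.
      by move=> [H|H]; apply: (US _ _ H) => i; auto.
    move=> H; apply: NNPP => nH.
    have H1 : U (fun i => ~ qholds B (ai i) p) by apply/Unot => ?; apply: nH; left.
    have H2 : U (fun i => ~ qholds B (ai i) q) by apply/Unot => ?; apply: nH; right.
    apply: UF; apply: (US _ _ (UI _ _ H (UI _ _ H1 H2))) => i [[?|?] [? ?]]; auto.
by apply/Hq; apply: (U_all UU) => i; apply: Hu.
Qed.

Theorem theoremA (L : lang) (B C : algebra L) :
  eq_noetherian B -> fin_gen C ->
  (* (1) <-> (2) *)
  (Th_univ_sub B C <-> Th_exist_sub C B) /\
  (* (1) <-> (3) *)
  (Th_univ_sub B C <-> embeds_in_ultrapower C B) /\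
  (* (1) <-> (4) *)
  (Th_univ_sub B C <-> discriminated C B) /\
  (* (1) <-> (5) *)
  (Th_univ_sub B C <-> exists S : dsystem L, limit_over B S /\ iso_limit C S) /\
  (* (1) <-> (6) *)
  (Th_univ_sub B C <->
     exists (n : nat) (p : literal L n -> Prop),
       complete_atomic_type B n p /\ iso_term_quotient C (fun t s => p (true, t, s))) /\
  (* (1) <-> (7) *)
  (Th_univ_sub B C <->
     exists (n : nat) (S : system L n),
       irreducible B (Vset B S) /\ iso_coord_alg B C (Vset B S)).
Proof.
move=> Noeth fg.
have UD : Th_univ_sub B C <-> discriminated C B :=
  conj (univ_disc Noeth fg) (@disc_univ L B C).
split; first exact: univ_exist.
split.
  split; [move/UD; exact: disc_ultra|exact: ultra_univ].
split; first exact: UD.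
split.
  split; [move/UD; exact: disc_limit|move=> [S [H1 H2]]; exact: limit_univ H1 H2].
split.
  split; [exact: univ_type fg|move=> [n [p [H1 H2]]]; exact: type_univ H1 H2].
split; first exact: univ_coord Noeth fg.
move=> [n [S [H1 H2]]]; apply: disc_univ; exact: coord_disc H1 H2.
Qed.
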